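(* Let $d\ge1$, $K\ge2$, $n\ge1$ be integers. (i) If $(\mathbf W^\star,\mathbf H^\star)$ is an optimal solution of $\min_{\mathbf W\in\mathrm{OB}(d,K),\mathbf H\in\mathrm{OB}(d,nK)}\mathcal L_{\mathrm{HardMax}}(\mathbf W,\mathbf H)$, then $\mathbf W^\star\in\operatorname{argmax}_{\mathbf W\in\mathrm{OB}(d,K)}\rho_{\text{one-vs-rest}}(\mathbf W)$. (ii) Conversely, for every $\mathbf W^{\mathrm{SC}}\in\operatorname{argmax}_{\mathbf W\in\mathrm{OB}(d,K)}\rho_{\text{one-vs-rest}}(\mathbf W)$ there exists $\mathbf H^{\mathrm{SC}}\in\mathrm{OB}(d,nK)$ such that $(\mathbf W^{\mathrm{SC}},\mathbf H^{\mathrm{SC}})$ is an optimal solution of that minimization problem.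
   Context: $\mathrm{OB}(d,m)$ is the set of real $d\times m$ matrices with unit-norm columns. $\mathbf W\in\mathrm{OB}(d,K)$ has columns $\mathbf w_1,\dots,\mathbf w_K$; $\mathbf H\in\mathrm{OB}(d,nK)$ has columns $\mathbf h_{k,i}$, $k\in[K],i\in[n]$. $\mathcal L_{\mathrm{HardMax}}(\mathbf W,\mathbf H)=\max_{k\in[K]}\max_{i\in[n]}\max_{k'\ne k}\langle \mathbf w_{k'}-\mathbf w_k,\mathbf h_{k,i}\rangle$. For a point $\mathbf v$ and finite set $\mathcal W$, $\operatorname{dist}(\mathbf v,\mathcal W)=\inf\{\|\mathbf v-\mathbf w\|_2:\mathbf w\in\operatorname{conv}(\mathcal W)\}$, and $\rho_{\text{one-vs-rest}}(\mathbf W)=\min_{k}\operatorname{dist}(\mathbf w_k,\{\mathbf w_j\}_{j\ne k})$. *)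

(* Defs.v *)
From HB Require Import structures.
From mathcomp Require Import all_boot all_order all_algebra.
From mathcomp Require Import boolp classical_sets reals.
Set Implicit Arguments. Unset Strict Implicit. Unset Printing Implicit Defensive.
Import Order.TTheory GRing.Theory Num.Theory.
Local Open Scope ring_scope.
Local Open Scope classical_set_scope.

Section Defs.
Variable R : realType.

Definition dotv (d : nat) (u v : 'cV[R]_d) : R := \sum_(i < d) u i 0 * v i 0.
Definition norm2 (d : nat) (v : 'cV[R]_d) : R := Num.sqrt (dotv v v).

Definition OB_W (d K : nat) (W : 'I_K -> 'cV[R]_d) : Prop :=
  forall k, norm2 (W k) = 1.
(* H in OB(d,nK): columns h_{k,i}, k in [K], i in [n], each of unit norm *)
Definition OB_H (d K n : nat) (H : 'I_K -> 'I_n -> 'cV[R]_d) : Prop :=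
  forall k i, norm2 (H k i) = 1.

(* L_HardMax(W,H) = max_k max_i max_{k' <> k} <w_k' - w_k, h_{k,i}>
   (maximum of a finite nonempty set, written as its supremum) *)
Definition L_HardMax (d K n : nat) (W : 'I_K -> 'cV[R]_d)
    (H : 'I_K -> 'I_n -> 'cV[R]_d) : R :=
  sup [set x : R | exists k : 'I_K, exists i : 'I_n, exists k' : 'I_K,
          k' != k /\ x = dotv (W k' - W k) (H k i)].

Definition conv_rest (d K : nat) (W : 'I_K -> 'cV[R]_d) (k : 'I_K) :
    set 'cV[R]_d :=
  [set w | exists a : 'I_K -> R,
     (forall j, j != k -> 0 <= a j) /\
     \sum_(j < K | j != k) a j = 1 /\
     w = \sum_(j < K | j != k) a j *: W j].

Definition dist_rest (d K : nat) (W : 'I_K -> 'cV[R]_d) (k : 'I_K) : R :=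
  inf [set x : R | exists w, conv_rest W k w /\ x = norm2 (W k - w)].

Definition rho_ovr (d K : nat) (W : 'I_K -> 'cV[R]_d) : R :=
  inf [set x : R | exists k : 'I_K, x = dist_rest W k].

Definition HardMax_optimal (d K n : nat) (W : 'I_K -> 'cV[R]_d)
    (H : 'I_K -> 'I_n -> 'cV[R]_d) : Prop :=
  OB_W W /\ OB_H H /\
  forall (W' : 'I_K -> 'cV[R]_d) (H' : 'I_K -> 'I_n -> 'cV[R]_d), OB_W W' -> OB_H H' -> L_HardMax W H <= L_HardMax W' H'.

Definition rho_argmax (d K : nat) (W : 'I_K -> 'cV[R]_d) : Prop :=
  OB_W W /\ forall W' : 'I_K -> 'cV[R]_d, OB_W W' -> rho_ovr W' <= rho_ovr W.

End Defs.

(* Main.v *)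
Require Import Defs.
From HB Require Import structures.
From mathcomp Require Import all_boot all_order all_algebra.
From mathcomp Require Import all_classical all_reals all_analysis.
From mathcomp Require Import ring lra.
Import Order.TTheory GRing.Theory Num.Theory.
Import numFieldNormedType.Exports.
Set Implicit Arguments. Unset Strict Implicit.
Local Open Scope ring_scope.
Local Open Scope classical_set_scope.

Section S.
Variable R : realType.

Lemma cont_sum (T : topologicalType) (I : Type) (r : seq I) (P : pred I)
  (f : I -> T -> R) : (forall i, continuous (f i)) ->
  continuous (fun x => \sum_(i <- r | P i) f i x).
Proof.
move=> fc; elim: r => [|i r IH].
  by under eq_fun do rewrite big_nil; exact: cst_continuous.
case: (boolP (P i)) => Pi.
  under eq_fun do rewrite big_cons Pi.
  by move=> x; apply: (@continuousD _ R^o); [exact: fc|exact: IH].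
by under eq_fun do rewrite big_cons (negbTE Pi).
Qed.

Definition simp K (k : 'I_K) : set 'rV[R]_K :=
  [set a | (forall j, a ord0 j \in `[0, 1]%R) /\ \sum_(j < K | j != k) a ord0 j = 1].

Lemma simp_compact K (k : 'I_K) : compact (simp k).
Proof.
have -> : simp k = [set v : 'rV[R]_K | forall i, `[0, 1]%classic (v ord0 i)] `&`
   ((fun v : 'rV[R]_K => \sum_(j < K | j != k) v ord0 j) @^-1` [set 1]).
  apply/seteqP; split => v /=.
    by move=> [h1 h2]; split => // i; move: (h1 i); rewrite inE.
  by move=> [h1 h2]; split => // i; rewrite inE; exact: h1.
apply: compact_closedI.
  by apply: (@rV_compact _ _ (fun=> `[(0:R), 1]%classic)) => i; exact: segment_compact.
apply: preimage_closed; last exact: closed_eq.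
move=> v _; apply: cont_sum => j; exact: coord_continuous.
Qed.

Section Dot.
Variable d : nat.
Implicit Types u v w : 'cV[R]_d.

Lemma dotvC u v : dotv u v = dotv v u.
Proof. by apply: eq_bigr => i _; rewrite mulrC. Qed.

Lemma dotvDl u v w : dotv (u + v) w = dotv u w + dotv v w.
Proof. by rewrite /dotv -big_split; apply: eq_bigr => i _; rewrite mxE mulrDl. Qed.

Lemma dotvZl (a : R) u v : dotv (a *: u) v = a * dotv u v.
Proof. by rewrite /dotv mulr_sumr; apply: eq_bigr => i _; rewrite mxE mulrA. Qed.

Lemma dotvNl u v : dotv (- u) v = - dotv u v.
Proof. by rewrite -scaleN1r dotvZl mulN1r. Qed.

Lemma dotvBl u v w : dotv (u - v) w = dotv u w - dotv v w.
Proof. by rewrite dotvDl dotvNl. Qed.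

Lemma dotvDr u v w : dotv w (u + v) = dotv w u + dotv w v.
Proof. by rewrite dotvC dotvDl !(dotvC w). Qed.

Lemma dotvZr (a : R) u v : dotv v (a *: u) = a * dotv v u.
Proof. by rewrite dotvC dotvZl dotvC. Qed.

Lemma dotvBr u v w : dotv w (u - v) = dotv w u - dotv w v.
Proof. by rewrite dotvC dotvBl !(dotvC w). Qed.

Lemma dotv_suml (I : finType) (P : pred I) (f : I -> 'cV[R]_d) v :
  dotv (\sum_(j | P j) f j) v = \sum_(j | P j) dotv (f j) v.
Proof.
elim/big_rec2: _ => [|j y u _ <-]; last by rewrite dotvDl.
by rewrite /dotv big1 // => i _; rewrite mxE mul0r.
Qed.

Lemma dotvv_ge0 v : 0 <= dotv v v.
Proof. by apply: sumr_ge0 => i _; rewrite -expr2 sqr_ge0. Qed.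

Lemma norm2_ge0 v : 0 <= norm2 v.
Proof. exact: sqrtr_ge0. Qed.

Lemma norm2_sq v : norm2 v ^+ 2 = dotv v v.
Proof. by rewrite /norm2 sqr_sqrtr // dotvv_ge0. Qed.

Lemma norm2N v : norm2 (- v) = norm2 v.
Proof. by rewrite /norm2 dotvNl dotvC dotvNl opprK. Qed.

Lemma dotvv_eq0 v : dotv v v = 0 -> v = 0.
Proof.
move=> /eqP; rewrite /dotv psumr_eq0 => [/allP H|i _]; last by rewrite -expr2 sqr_ge0.
apply/matrixP => i j; rewrite (ord1 j) mxE.
by have := H i (mem_index_enum _); rewrite -expr2 sqrf_eq0 => /eqP.
Qed.

Lemma unit_dot v : norm2 v = 1 -> dotv v v = 1.
Proof. by move=> h; rewrite -norm2_sq h expr1n. Qed.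

Lemma CS_unit (x h : 'cV[R]_d) : dotv h h = 1 -> - norm2 x <= dotv x h.
Proof.
move=> hh; set N := norm2 x.
have N0 : 0 <= N := norm2_ge0 x.
have := dotvv_ge0 (x + N *: h).
rewrite !dotvDl !dotvDr !dotvZl !dotvZr hh -norm2_sq -/N (dotvC h x) => H.
have [Np|N0'] := ltP 0 N; last first.
  have NE : N = 0 by apply/le_anti; rewrite N0 N0'.
  have : dotv x x = 0 by rewrite -norm2_sq -/N NE expr0n.
  by move/dotvv_eq0 => ->; rewrite /dotv big1 ?NE ?oppr0 // => i _; rewrite mxE mul0r.
have : 0 <= 2 * N * (N + dotv x h) by rewrite (_ : _ * _ = N ^+ 2 + N * dotv x h + (N * dotv x h + N * (N * 1))) //; ring.
rewrite pmulr_rge0 ?mulr_gt0 // => H2; lra.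
Qed.

Lemma unit_dot_le1 u v : dotv u u = 1 -> dotv v v = 1 -> dotv u v <= 1.
Proof.
move=> hu hv; have := dotvv_ge0 (u - v).
rewrite !dotvBl !dotvBr hu hv (dotvC v u) => H; lra.
Qed.

Lemma dot_expand (u v : 'cV[R]_d) (t : R) :
  dotv (u - t *: v) (u - t *: v) = dotv u u - 2 * t * dotv u v + t ^+ 2 * dotv v v.
Proof. by rewrite !dotvBl !dotvBr !dotvZl !dotvZr (dotvC v u); ring. Qed.

End Dot.

Lemma simp_row1 K (k j0 : 'I_K) : j0 != k ->
  simp k (\row_j ((j == j0)%:R : R)).
Proof.
move=> jk; rewrite /simp /=; split => [j|].
  by rewrite mxE in_itv /=; case: (j == j0); rewrite /= ?lexx ?ler01.
rewrite (bigD1 j0) //= mxE eqxx big1 ?addr0 // => l /andP[_ lj].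
by rewrite mxE (negbTE lj).
Qed.

Lemma nearest d K (W : 'I_K -> 'cV[R]_d) (k j0 : 'I_K) : j0 != k ->
  exists p, conv_rest W k p /\ forall j, j != k -> dotv (W k - p) (W j - p) <= 0.
Proof.
move=> j0k.
pose S (a : 'rV[R]_K) := \sum_(j < K | j != k) a ord0 j *: W j.
pose F a := dotv (W k - S a) (W k - S a).
have Fc : continuous F.
  have FE : F = fun a => \sum_(i < d) ((W k i ord0 - \sum_(j < K | j != k) a ord0 j * W j i ord0) *
         (W k i ord0 - \sum_(j < K | j != k) a ord0 j * W j i ord0)).
    apply: funext => a; rewrite /F /dotv; apply: eq_bigr => i _.
    rewrite !mxE /S summxE; under eq_bigr do rewrite mxE.
    done.
  rewrite FE; apply: cont_sum => i a.
  have hc : continuous (fun a : 'rV[R]_K => W k i ord0 - \sum_(j < K | j != k) a ord0 j * W j i ord0).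
    move=> b; apply: continuousB; first exact: cst_continuous.
    apply: cont_sum => j c; apply: continuousM; first exact: coord_continuous.
    exact: cst_continuous.
  exact: (continuousM (hc a) (hc a)).
have ne : simp k !=set0 by exists (\row_j ((j == j0)%:R : R)); exact: simp_row1.
have [a aS amin] := compact_EVT_min ne (@simp_compact K k) (continuous_subspaceT Fc).
move: aS; rewrite inE => -[a01 asum].
exists (S a); split.
  exists (fun j => a ord0 j); split; last by split.
  by move=> j _; move: (a01 j); rewrite in_itv /= => /andP[].
move=> j jk.
set v := W k - S a; set e := W j - S a.
have H : forall t, 0 < t <= 1 -> 2 * dotv v e <= t * dotv e e.
  move=> t /andP[t0 t1].
  pose b := \row_l ((1 - t) * a ord0 l + t * (l == j)%:R).
  have bS : simp k b.
    split => [l|].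
      rewrite mxE; move: (a01 l); rewrite !in_itv /= => /andP[al0 al1].
      case: (l == j); rewrite ?mulr1 ?mulr0 ?addr0; apply/andP; split; nra.
    under eq_bigr do rewrite mxE.
    rewrite big_split /= -mulr_sumr asum -mulr_sumr (bigD1 j) //= eqxx big1 ?addr0.
      by rewrite mulr1 mulr1 subrK.
    by move=> l /andP[_ lj]; rewrite (negbTE lj).
  have := amin b (mem_set bS).
  have SbE : S b = S a + t *: e.
    rewrite /S; under eq_bigr do rewrite mxE scalerDl.
    rewrite big_split /= [X in _ + X](bigD1 j) //= [X in _ + (_ + X)]big1 ?addr0; last first.
      by move=> l /andP[_ lj]; rewrite (negbTE lj) mulr0 scale0r.
    rewrite ?eqxx mulr1 /e scalerBr; under eq_bigr do rewrite -scalerA.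
    rewrite -scaler_sumr scalerBl scale1r; set s := \sum_(_ < _ | _) _.
    by rewrite /S -/s addrA addrAC.
  rewrite /F SbE -/v (_ : W k - (S a + t *: e) = v - t *: e); last by rewrite /v opprD addrA.
  rewrite dot_expand => Hle.
  have : 0 <= t * (t * dotv e e - 2 * dotv v e) by rewrite mulrBr; lra.
  by rewrite pmulr_rge0 // subr_ge0.
rewrite leNgt; apply/negP => c0.
set c := dotv v e in H c0; set E := dotv e e in H.
have E0 : 0 <= E := dotvv_ge0 e.
have Ec : 0 < E + c by lra.
have t01 : 0 < c / (E + c) <= 1.
  by rewrite divr_gt0 //= ler_pdivrMr // mul1r; lra.
have := H _ t01; set t := c / (E + c) in t01 *.
have tE : t * E + t * c = c by rewrite -mulrDr /t divfK ?gt_eqF.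
have tc : 0 < t * c by rewrite mulr_gt0 //; case/andP: t01.
lra.
Qed.

Section Main.
Variables (d K n : nat).
Hypotheses (hK : (2 <= K)%N) (hn : (1 <= n)%N).
Implicit Types (W : 'I_K -> 'cV[R]_d) (H : 'I_K -> 'I_n -> 'cV[R]_d).

Let k0 : 'I_K := Ordinal (ltn_trans (ltnSn 0) hK).
Let k1 : 'I_K := Ordinal hK.
Let i0 : 'I_n := Ordinal hn.

Lemma exists_other (k : 'I_K) : exists j, j != k.
Proof.
case: (eqVneq k k0) => [->|kk]; last by exists k0; rewrite eq_sym.
by exists k1.
Qed.

Lemma dotN_le1 (u v : 'cV[R]_d) : dotv u u = 1 -> dotv v v = 1 -> - dotv u v <= 1.
Proof.
move=> hu hv; rewrite -dotvNl; apply: unit_dot_le1 => //.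
by rewrite dotvNl dotvC dotvNl opprK.
Qed.

Lemma L_ub W H k i k' : OB_W W -> OB_H H -> k' != k ->
  dotv (W k' - W k) (H k i) <= L_HardMax W H.
Proof.
move=> hW hH kk; apply: sup_upper_bound; last by exists k, i, k'.
split; first by exists (dotv (W k' - W k) (H k i)); exists k, i, k'.
exists 2 => y [a [b [c [_ ->]]]]; rewrite dotvBl.
have := unit_dot_le1 (unit_dot (hW c)) (unit_dot (hH a b)).
have := dotN_le1 (unit_dot (hW a)) (unit_dot (hH a b)).
lra.
Qed.

Lemma L_le W H (b : R) :
  (forall k i k', k' != k -> dotv (W k' - W k) (H k i) <= b) -> L_HardMax W H <= b.
Proof.
move=> hb; apply: ge_sup.
  by exists (dotv (W k1 - W k0) (H k0 i0)); exists k0, i0, k1.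
by move=> y [a [i [c [ca ->]]]]; exact: hb.
Qed.

Lemma conv_ne W k : exists w, conv_rest W k w.
Proof.
have [j0 jk] := exists_other k.
exists (\sum_(j < K | j != k) (j == j0)%:R *: W j).
exists (fun j => (j == j0)%:R); split; first by move=> j _; case: (j == j0).
split => //; rewrite (bigD1 j0) //= eqxx big1 ?addr0 // => l /andP[_ lj].
by rewrite (negbTE lj).
Qed.

Lemma dist_ge W k (b : R) :
  (forall w, conv_rest W k w -> b <= norm2 (W k - w)) -> b <= dist_rest W k.
Proof.
move=> hb; apply: lb_le_inf.
  by have [w cw] := conv_ne W k; exists (norm2 (W k - w)), w.
by move=> y [w [cw ->]]; exact: hb.
Qed.

Lemma dist_le W k w : conv_rest W k w -> dist_rest W k <= norm2 (W k - w).
Proof.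
move=> cw; apply: ge_inf; last by exists w.
by exists 0 => y [w' [_ ->]]; exact: norm2_ge0.
Qed.

Lemma dist_ge0 W k : 0 <= dist_rest W k.
Proof. by apply: dist_ge => w _; exact: norm2_ge0. Qed.

Lemma rho_le W k : rho_ovr W <= dist_rest W k.
Proof.
apply: ge_inf; last by exists k.
by exists 0 => y [k' ->]; exact: dist_ge0.
Qed.

Lemma rho_ge W (b : R) : (forall k, b <= dist_rest W k) -> b <= rho_ovr W.
Proof.
move=> hb; apply: lb_le_inf; first by exists (dist_rest W k0), k0.
by move=> y [k ->]; exact: hb.
Qed.

Lemma rho_ge0 W : 0 <= rho_ovr W.
Proof. by apply: rho_ge => k; exact: dist_ge0. Qed.

Lemma LB W H : OB_W W -> OB_H H -> - rho_ovr W <= L_HardMax W H.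
Proof.
move=> hW hH; rewrite lerNl; apply: rho_ge => k; apply: dist_ge => w.
move=> [a [a0 [asum ->]]].
set h := H k i0.
have := CS_unit (\sum_(j < K | j != k) a j *: W j - W k) (unit_dot (hH k i0)).
rewrite -norm2N opprB.
have -> : \sum_(j < K | j != k) a j *: W j - W k = \sum_(j < K | j != k) a j *: (W j - W k).
  under [RHS]eq_bigr do rewrite scalerBr.
  by rewrite sumrB -scaler_suml asum scale1r.
rewrite dotv_suml => H1.
have H2 : \sum_(j < K | j != k) dotv (a j *: (W j - W k)) (H k i0) <= L_HardMax W H.
  apply: (@le_trans _ _ (\sum_(j < K | j != k) a j * L_HardMax W H)); last first.
    by rewrite -mulr_suml asum mul1r.
  apply: ler_sum => j jk; rewrite dotvZl; apply: ler_wpM2l; first exact: a0.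
  exact: L_ub.
lra.
Qed.

Lemma UB0 W : OB_W W -> OB_H (fun k (_ : 'I_n) => W k) /\ L_HardMax W (fun k (_ : 'I_n) => W k) <= 0.
Proof.
move=> hW; split => [k i|]; first exact: hW.
apply: L_le => k i k' _; rewrite dotvBl (unit_dot (hW k)) subr_le0.
exact: unit_dot_le1 (unit_dot (hW k')) (unit_dot (hW k)).
Qed.

Lemma UBpos W : OB_W W -> 0 < rho_ovr W ->
  exists H, OB_H H /\ L_HardMax W H <= - rho_ovr W.
Proof.
move=> hW rpos.
have : forall k, exists p, conv_rest W k p /\
    forall j, j != k -> dotv (W k - p) (W j - p) <= 0.
  by move=> k; have [j0 jk] := exists_other k; exact: nearest jk.
case/choice => p hp.
pose D k := norm2 (W k - p k).
have Dge k : rho_ovr W <= D k.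
  exact: le_trans (rho_le W k) (dist_le (hp k).1).
have Dpos k : 0 < D k by exact: lt_le_trans rpos (Dge k).
have DD k : dotv (W k - p k) (W k - p k) = D k ^+ 2 by rewrite norm2_sq.
exists (fun k _ => (D k)^-1 *: (W k - p k)); split.
  move=> k i; rewrite /norm2 dotvZl dotvZr DD.
  by rewrite mulrA -expr2 -exprMn mulVf ?gt_eqF // expr1n sqrtr1.
apply: L_le => k i k' kk.
rewrite dotvZr.
have -> : W k' - W k = (W k' - p k) - (W k - p k) by rewrite opprB addrA subrK.
rewrite dotvBl DD dotvC.
have h1 := (hp k).2 k' kk.
have Dk := Dpos k; have Dg := Dge k.
rewrite -(@ler_pM2l _ (D k)) // mulrA divff ?gt_eqF // mul1r.
nra.
Qed.

Lemma main_aux :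
  (forall W H, HardMax_optimal W H -> rho_argmax W) /\
  (forall W, rho_argmax W -> exists H, OB_H H /\ HardMax_optimal W H).
Proof.
split.
  move=> W H [hW [hH opt]]; split => // W' hW'.
  have [rp|r0] := ltP 0 (rho_ovr W'); last exact: le_trans r0 (rho_ge0 W).
  have [H' [hH' HL]] := UBpos hW' rp.
  have := opt W' H' hW' hH'; have := LB hW hH; lra.
move=> W [hW am].
have [H [hH HL]] : exists H, OB_H H /\ L_HardMax W H <= - rho_ovr W.
  have [rp|r0] := ltP 0 (rho_ovr W); first exact: UBpos.
  have [hH HL] := UB0 hW; exists (fun k (_ : 'I_n) => W k); split => //.
  have := rho_ge0 W; lra.
exists H; split => //; split => //; split => // W' H' hW' hH'.
have := am W' hW'; have := LB hW' hH'; lra.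
Qed.

End Main.

End S.

Theorem mainTheorem3 (R : realType) (d K n : nat)
  (hd : (1 <= d)%N) (hK : (2 <= K)%N) (hn : (1 <= n)%N) :
  (forall (W : 'I_K -> 'cV[R]_d) (H : 'I_K -> 'I_n -> 'cV[R]_d),
      HardMax_optimal W H -> rho_argmax W) /\
  (forall W : 'I_K -> 'cV[R]_d, rho_argmax W ->
      exists H : 'I_K -> 'I_n -> 'cV[R]_d, OB_H H /\ HardMax_optimal W H).
Proof. exact: (@main_aux R d K n hK hn). Qed.
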